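(* Let $n$ be a nonnegative integer and let $x$ be a complex number such that no denominator below vanishes. Then \[ \sum_{k=0}^{2n}(-1)^k\binom{2n}{k}\frac{\binom{x+k}{k}^2}{\binom{x+2n}{k}^2}H_{k}^{\langle2\rangle}(x) =\frac{1}{2}\frac{\binom{x+n}{n}^2\binom{1+2x+2n}{2n}}{\binom{x+2n}{2n}^2\binom{1+2x+n}{n}}H_{n}^{\langle2\rangle}(x). \]
   Context: For complex $z$ and a nonnegative integer $k$, $\binom{z}{k}=\frac{z(z-1)\cdots(z-k+1)}{k!}$ (with $\binom{z}{0}=1$). For complex $x$ and nonnegative integer $m$, $H_0^{\langle 2\rangle}(x)=0$ and $H_m^{\langle 2\rangle}(x)=\sum_{j=1}^m\frac{1}{(x+j)^2}$ for $m\ge1$. The parameter $x$ is assumed to be such that all denominators are nonzero. *)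

(* Defs.v *)
From HB Require Import structures.
From mathcomp Require Import all_boot all_order all_algebra.
From mathcomp Require Import complex.
From mathcomp Require Import Rstruct.
From Stdlib Require Rdefinitions.
Set Implicit Arguments. Unset Strict Implicit. Unset Printing Implicit Defensive.
Import Order.TTheory GRing.Theory Num.Theory.
Local Open Scope ring_scope.

Notation Cplx := (complex Rdefinitions.R).

Definition binom (z : Cplx) (k : nat) : Cplx :=
  (\prod_(i < k) (z - i%:R)) / (k`!)%:R.

Definition H2 (x : Cplx) (m : nat) : Cplx :=
  \sum_(1 <= j < m.+1) 1 / (x + j%:R) ^+ 2.

(* Main.v *)
Require Import Defs.
From HB Require Import structures.
From mathcomp Require Import all_boot all_order all_algebra.
From mathcomp Require Import complex Rstruct.
From mathcomp Require Import ring lra zify.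
Import Order.TTheory GRing.Theory Num.Theory.
Local Open Scope ring_scope.

Lemma natf_neq0 (a : nat) : (a.+1)%:R != 0 :> Cplx.
Proof. by rewrite pnatr_eq0. Qed.

Lemma fact_neq0 (a : nat) : (a`!)%:R != 0 :> Cplx.
Proof. by rewrite pnatr_eq0 -lt0n fact_gt0. Qed.

Lemma binf (a b : nat) : (b <= a)%N ->
  'C(a,b)%:R = a`!%:R / (b`!%:R * (a-b)`!%:R) :> Cplx.
Proof.
move=> le; have := bin_fact le => /(congr1 (fun z => z%:R : Cplx)).
rewrite !natrM => <-; field.
by rewrite !fact_neq0.
Qed.

Lemma binf2 (k m : nat) :
  'C(k + m, k)%:R = (k + m)`!%:R / (k`!%:R * m`!%:R) :> Cplx.
Proof. by rewrite binf ?leq_addr // addKn. Qed.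

Lemma natr2 (n : nat) : (n.+2)%:R = n%:R + 2 :> Cplx.
Proof. by rewrite -addn2 natrD. Qed.

Lemma binom_shift (y : Cplx) (m k : nat) :
  binom (y + (m + k)%:R) k * k`!%:R = \prod_(i < k) (y + (m + i.+1)%:R).
Proof.
rewrite /binom divfK ?fact_neq0 //.
rewrite (reindex_inj rev_ord_inj) /=; apply: eq_bigr => i _.
have hi := ltn_ord i.
rewrite -addrA -natrB; last by lia.
congr (_ + _%:R); lia.
Qed.

Lemma sign_rev (n k : nat) : (k <= 2 * n)%N -> (-1) ^+ (2 * n - k) = (-1) ^+ k :> Cplx.
Proof.
move=> hk; rewrite -signr_odd oddB // oddM andFb addFb signr_odd //.
Qed.

Lemma sum_rev (N : nat) (F : nat -> Cplx) :
  \sum_(0 <= k < N.+1) F k = \sum_(0 <= k < N.+1) F (N - k)%N.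
Proof.
rewrite big_nat_rev; apply: eq_big_nat => k _; by rewrite add0n subSS.
Qed.

Section S.
Variable x : Cplx.

Definition q (t : Cplx) (i : nat) : Cplx := (x + i%:R) ^+ 2 - t.
Definition Q t m := \prod_(i < m) q t i.+1.
Definition f t n k := (-1) ^+ k * 'C(2 * n, k)%:R * (Q t k * Q t (2 * n - k)).
Definition yy t n k : Cplx :=
  let N := n%:R in let K := k%:R in let p := x ^+ 2 - t in
  (N+1)*K^+2 - (N+1)*(7+4*x+6*N)*K + 10 + 8*x - 2 * p - 2*x * p + 28*N + 16*N*x
  - N * p + 26*N^+2 + 8*N^+2*x + 8*N^+3.
Definition G t n k := (-1) ^+ k * 'C((2 * n).+2, k)%:R * k%:R
   * (Q t k * Q t ((2 * n).+1 - k)) * yy t n k.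

Lemma QS t m : Q t m.+1 = Q t m * q t m.+1.
Proof. by rewrite /Q big_ord_recr. Qed.

Lemma termwise t n k : (k <= 2 * n)%N ->
  2 * (n%:R + 1) * ((2 * x + n%:R + 2) * f t n.+1 k
     - 2 * (2 * n%:R + 1) * q t n.+1 * (2 * x + 2 * n%:R + 2) * (2 * x + 2 * n%:R + 3) * f t n k)
  = G t n k.+1 - G t n k.
Proof.
move=> le; set m := (2 * n - k)%N.
have e : (2 * n = k + m)%N by rewrite /m subnKC.
have hn : n%:R = (k%:R + m%:R) / 2 :> Cplx.
  have h2 : 2 * n%:R = k%:R + m%:R :> Cplx by rewrite -natrM e natrD.
  by rewrite -h2; field.
rewrite /f /G.
have -> : (2 * n.+1 = (k + m).+2)%N by lia.
rewrite e.
have -> : ((k + m).+2 - k = m.+2)%N by lia.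
have -> : ((k + m).+1 - k = m.+1)%N by lia.
have -> : ((k + m).+1 - k.+1 = m)%N by lia.
have -> : ((k + m) - k = m)%N by lia.
have -> : ((k + m).+2 = k + m.+2)%N by lia.
rewrite binf2.
have -> : ((k + m.+2) = k.+1 + m.+1)%N by lia.
rewrite !binf2.
have -> : (k.+1 + m.+1 = (k + m).+2)%N by lia.
rewrite !QS /q /yy.
rewrite !factS !natrM [(-1) ^+ k.+1]exprS.
rewrite -?(natr1 (k + m).+1) -?(natr1 (k + m)) -?(natr1 m.+1) -?(natr1 m) -?(natr1 k) -?(natr1 n).
rewrite !natrD hn.
field.
by rewrite !natr1 !fact_neq0 !natf_neq0.
Qed.

Lemma Q0 t : Q t 0 = 1.
Proof. by rewrite /Q big_ord0. Qed.

Lemma boundary t n :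
  G t n (2 * n).+1 = - (2 * (n%:R + 1) * ((2 * x + n%:R + 2)
     * (f t n.+1 (2 * n).+1 + f t n.+1 (2 * n).+2))).
Proof.
rewrite /G /f.
have -> : (2 * n.+1 = (2 * n).+2)%N by lia.
have -> : ((2 * n).+2 - (2 * n).+1 = 1)%N by lia.
rewrite !subnn Q0 binSn binn.
rewrite !QS Q0 /q /yy.
have hm : (-1) ^+ (2 * n) = 1 :> Cplx by rewrite exprM sqrrN !expr1n.
rewrite !exprS hm.
rewrite -?(natr1 (2 * n).+1) -?(natr1 (2 * n)) -?(natr1 n) -?(natr1 0) !natrM.
ring.
Qed.

Definition s t n := \sum_(0 <= k < (2 * n).+1) f t n k.

Lemma recur t n : (2 * x + n%:R + 2) * s t n.+1 =
  2 * (2 * n%:R + 1) * q t n.+1 * (2 * x + 2 * n%:R + 2) * (2 * x + 2 * n%:R + 3) * s t n.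
Proof.
apply/eqP; rewrite -subr_eq0; apply/eqP.
apply: (mulfI (_ : 2 * (n%:R + 1) != 0 :> Cplx)).
  by rewrite mulf_eq0 negb_or natr1 natf_neq0 pnatr_eq0.
rewrite mulr0 /s.
have -> : ((2 * n.+1).+1 = (2 * n).+3)%N by lia.
rewrite big_nat_recr // big_nat_recr //=.
set S1 := \sum_(0 <= i < (2 * n).+1) f t n.+1 i.
set S0 := \sum_(0 <= i < (2 * n).+1) f t n i.
set A := (2 * x + n%:R + 2).
set B := 2 * (2 * n%:R + 1) * q t n.+1 * (2 * x + 2 * n%:R + 2) * (2 * x + 2 * n%:R + 3).
have : 2 * (n%:R + 1) * (A * S1 - B * S0) = G t n (2 * n).+1 - G t n 0.
  rewrite /S1 /S0 mulr_sumr mulr_sumr -sumrB mulr_sumr.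
  apply: telescope_sumr_eq => // k /andP [_ hk].
  exact: termwise.
have -> : G t n 0 = 0 by rewrite /G mulr0 !mul0r.
rewrite boundary subr0 => h.
transitivity (2 * (n%:R + 1) * (A * S1 - B * S0) + 2 * (n%:R + 1) *
  (A * (f t n.+1 (2 * n).+1 + f t n.+1 (2 * n).+2))); first by ring.
by rewrite h addrC subrr.
Qed.

Definition pr2 m := \prod_(i < m) (2 * x + (i.+2)%:R).
Definition D n := (2 * n)`!%:R / n`!%:R * pr2 (2 * n) / pr2 n.

Lemma pr2S m : pr2 m.+1 = pr2 m * (2 * x + (m.+2)%:R).
Proof. by rewrite /pr2 big_ord_recr. Qed.

Lemma pr2_neq0 n : (forall i, (i < n)%N -> 2 * x + (i.+2)%:R != 0) -> pr2 n != 0.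
Proof. by move=> h; rewrite /pr2; apply/prodf_neq0 => i _; apply: h. Qed.

Lemma dixon t n : (forall i, (i < n)%N -> 2 * x + (i.+2)%:R != 0) ->
  s t n = D n * Q t n.
Proof.
elim: n => [|n IH] h.
  by rewrite /s /D big_nat1 /f /pr2 !big_ord0 !Q0 /= expr0 bin0 !mul1r divr1 !mulr1 fact0 invr1.
have hA : 2 * x + n%:R + 2 != 0.
  by rewrite -addrA -natr2 h.
have hP := @pr2_neq0 n (fun i hi => h i (ltnW hi)).
have -> : s t n.+1 = 2 * (2 * n%:R + 1) * q t n.+1 * (2 * x + 2 * n%:R + 2)
   * (2 * x + 2 * n%:R + 3) * s t n / (2 * x + n%:R + 2).
  by rewrite -recur mulrC mulKf.
rewrite IH; last by move=> i hi; apply: h; apply: ltnW.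
rewrite /D QS.
have -> : (2 * n.+1 = (2 * n).+2)%N by lia.
rewrite !pr2S !factS !natrM.
have hx1 : (2 * x + (n.+2)%:R) = 2 * x + n%:R + 2.
  by rewrite -addrA -natr2.
rewrite hx1.
rewrite -?(natr1 (2 * n).+1) -?(natr1 (2 * n)) -?(natr1 n) !natrM.
field.
by rewrite hA hP fact_neq0 natr1 natf_neq0.
Qed.

Definition Qp m : {poly Cplx} := \prod_(i < m) (((x + (i.+1)%:R) ^+ 2)%:P - 'X).

Lemma QpE t m : (Qp m).[t] = Q t m.
Proof. by rewrite /Qp /Q horner_prod; apply: eq_bigr => i _; rewrite /q !hornerE. Qed.

Lemma QpS m : Qp m.+1 = Qp m * (((x + (m.+1)%:R) ^+ 2)%:P - 'X).
Proof. by rewrite /Qp big_ord_recr. Qed.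

Lemma H2S m : H2 x m.+1 = H2 x m + 1 / (x + (m.+1)%:R) ^+ 2.
Proof. by rewrite /H2 big_nat_recr. Qed.


Lemma dQp m : (forall j, (1 <= j <= m)%N -> x + j%:R != 0) ->
  (Qp m)^`().[0] = - Q 0 m * H2 x m.
Proof.
elim: m => [|m IH] h.
  by rewrite /Qp big_ord0 derivC !hornerE Q0 /H2 big_geq // mulr0.
rewrite QpS derivM derivB derivC derivX !hornerE IH; last first.
  by move=> j /andP [h1 h2]; apply: h; rewrite h1 ltnW.
rewrite QpE QS H2S /q.
have hm : x + (m.+1)%:R != 0 by apply: h; rewrite /= leqnn.
field.
by rewrite [1 + _]addrC natr1.
Qed.

Lemma poly_zero (p : {poly Cplx}) : (forall t, p.[t] = 0) -> p = 0.
Proof.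
move=> h; apply/eqP; apply/negPn/negP => pn0.
have H := @max_poly_roots _ p [seq i%:R | i <- iota 0 (size p)] pn0.
rewrite size_map size_iota ltnn in H.
suff : false by [].
apply: H.
  by apply/allP => z /mapP [i _ ->]; rewrite /root h.
rewrite map_inj_uniq ?iota_uniq // => i j /eqP; rewrite eqr_nat => /eqP.
done.
Qed.

Lemma deriv_id n : (forall i, (i < n)%N -> 2 * x + (i.+2)%:R != 0) ->
  (forall j, (1 <= j <= 2 * n)%N -> x + j%:R != 0) ->
  \sum_(0 <= k < (2 * n).+1) (-1) ^+ k * 'C(2 * n, k)%:R *
     (Q 0 k * Q 0 (2 * n - k) * (H2 x k + H2 x (2 * n - k)))
  = D n * Q 0 n * H2 x n.
Proof.
move=> h1 h2.
set Dl := \sum_(0 <= k < (2 * n).+1) ((-1) ^+ k * 'C(2 * n, k)%:R)%:P * (Qp k * Qp (2 * n - k))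
   - (D n)%:P * Qp n.
have hD : Dl = 0.
  apply: poly_zero => t.
  rewrite /Dl hornerD hornerN horner_sum hornerM hornerC QpE -(dixon t n h1) /s.
  apply/eqP; rewrite subr_eq0; apply/eqP; apply: eq_bigr => k _.
  by rewrite hornerM hornerC hornerM !QpE /f mulrA.
have := congr1 (fun p => p^`().[0]) hD.
rewrite /Dl /= derivB raddf_sum derivE hornerD hornerN horner_sum.
rewrite hornerM hornerC derivC hornerE => H.
have hj : forall m, (m <= 2 * n)%N -> forall j, (1 <= j <= m)%N -> x + j%:R != 0.
  move=> m hm j /andP [j1 j2]; apply: h2; rewrite j1 /=; exact: leq_trans j2 hm.
have e : forall k, (k <= 2 * n)%N ->
   ((((-1) ^+ k * 'C(2 * n, k)%:R)%:P * (Qp k * Qp (2 * n - k)))^`()).[0] =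
   - ((-1) ^+ k * 'C(2 * n, k)%:R *
     (Q 0 k * Q 0 (2 * n - k) * (H2 x k + H2 x (2 * n - k)))).
  move=> k hk.
  set R := (X in _ = X).
  rewrite derivE derivM !hornerE !dQp ?QpE; last 2 first.
  - exact: hj (leq_subr _ _).
  - exact: hj hk.
  rewrite /R; ring.
pose F2 := (fun k : nat => - ((-1) ^+ k * 'C(2 * n, k)%:R *
     (Q 0 k * Q 0 (2 * n - k) * (H2 x k + H2 x (2 * n - k)))) : Cplx).
rewrite (eq_big_nat _ _ (F2 := F2)) in H; last first.
  by move=> k /andP [_ hk]; rewrite ltnS in hk; rewrite /= e.
rewrite /F2 sumrN dQp in H; last by apply: hj; rewrite leq_pmull.
apply/eqP; rewrite -subr_eq0 -oppr_eq0; apply/eqP; rewrite -[RHS]H; ring.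
Qed.

Definition X m := \prod_(i < m) (x + (i.+1)%:R).

Lemma Q0X m : Q 0 m = X m ^+ 2.
Proof. by rewrite /Q /X -prodrXl; apply: eq_bigr => i _; rewrite /q subr0. Qed.

Lemma Xsplit m k : X (m + k) = X m * \prod_(i < k) (x + (m + i.+1)%:R).
Proof.
by rewrite /X big_split_ord; congr (_ * _); apply: eq_bigr => i _; rewrite /= addnS.
Qed.

Lemma binX k : binom (x + k%:R) k * k`!%:R = X k.
Proof.
by have := binom_shift x 0 k; rewrite add0n => ->; apply: eq_bigr => i _; rewrite add0n.
Qed.

Lemma binP n : binom (1 + 2 * x + n%:R) n * n`!%:R = pr2 n.
Proof.
have := binom_shift (1 + 2 * x) 0 n; rewrite add0n => ->; apply: eq_bigr => i _.
by rewrite add0n -natr1 -natr1 -[(i.+1)%:R]natr1; ring.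
Qed.

Lemma sym n : \sum_(0 <= k < (2 * n).+1) (-1) ^+ k * 'C(2 * n, k)%:R *
     (Q 0 k * Q 0 (2 * n - k) * H2 x (2 * n - k)) =
  \sum_(0 <= k < (2 * n).+1) (-1) ^+ k * 'C(2 * n, k)%:R *
     (Q 0 k * Q 0 (2 * n - k) * H2 x k).
Proof.
rewrite sum_rev; apply: eq_big_nat => k /andP [_ hk]; rewrite ltnS in hk.
by rewrite subKn // sign_rev // bin_sub // [Q 0 (2 * n - k) * _]mulrC.
Qed.

End S.

Theorem theorem2 (n : nat) (x : Cplx)
  (hx : forall j : nat, (1 <= j <= 2 * n)%N -> x + j%:R != 0)
  (hb : forall k : nat, (k <= 2 * n)%N -> binom (x + (2 * n)%:R) k != 0)
  (hb2 : binom (1 + 2 * x + n%:R) n != 0) :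
  \sum_(0 <= k < (2 * n).+1)
     (-1) ^+ k * ('C(2 * n, k))%:R
       * ((binom (x + k%:R) k) ^+ 2 / (binom (x + (2 * n)%:R) k) ^+ 2)
       * H2 x k
  = 1 / 2 * ((binom (x + n%:R) n) ^+ 2 * binom (1 + 2 * x + (2 * n)%:R) (2 * n)
             / ((binom (x + (2 * n)%:R) (2 * n)) ^+ 2 * binom (1 + 2 * x + n%:R) n))
    * H2 x n.
Proof.
have hP : pr2 x n != 0.
  by rewrite -binP mulf_neq0 // fact_neq0.
have h1 : forall i, (i < n)%N -> 2 * x + (i.+2)%:R != 0.
  move=> i hi; move/prodf_neq0: hP => /(_ (Ordinal hi)); exact.
have hXN : X x (2 * n) != 0.
  apply/prodf_neq0 => i _; apply: hx; rewrite /= ltn_ord //.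
have hdi := @deriv_id x n h1 hx.
have eL : forall k, (k <= 2 * n)%N ->
  binom (x + k%:R) k ^+ 2 / binom (x + (2 * n)%:R) k ^+ 2
  = Q x 0 k * Q x 0 (2 * n - k) / Q x 0 (2 * n).
  move=> k hk.
  have e2 : (2 * n = (2 * n - k) + k)%N by rewrite subnK.
  have hs := Xsplit x (2 * n - k) k.
  rewrite -e2 in hs.
  have hb1 := binX x k.
  have hb3 := binom_shift x (2 * n - k) k.
  rewrite -e2 in hb3.
  rewrite !Q0X.
  have hXk : X x (2 * n - k) != 0.
    by move: hXN; rewrite hs mulf_eq0 negb_or => /andP [].
  have hY : \prod_(i < k) (x + (2 * n - k + i.+1)%:R) != 0.
    by move: hXN; rewrite hs mulf_eq0 negb_or => /andP [].
  rewrite hs -hb1 -hb3.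
  field.
  by rewrite fact_neq0 hb // hXk.
transitivity (\sum_(0 <= k < (2 * n).+1) ((-1) ^+ k * 'C(2 * n, k)%:R *
     (Q x 0 k * Q x 0 (2 * n - k) * H2 x k)) / Q x 0 (2 * n)).
  apply: eq_big_nat => k /andP [_ hk]; rewrite ltnS in hk.
  by rewrite eL //; rewrite !mulrA mulrAC.
rewrite -mulr_suml.
have hsum : \sum_(0 <= k < (2 * n).+1) (-1) ^+ k * 'C(2 * n, k)%:R *
     (Q x 0 k * Q x 0 (2 * n - k) * H2 x k) = D x n * Q x 0 n * H2 x n / 2.
  rewrite -hdi.
  have -> : \sum_(0 <= k < (2 * n).+1) (-1) ^+ k * 'C(2 * n, k)%:R *
     (Q x 0 k * Q x 0 (2 * n - k) * (H2 x k + H2 x (2 * n - k))) =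
     \sum_(0 <= k < (2 * n).+1) (-1) ^+ k * 'C(2 * n, k)%:R *
     (Q x 0 k * Q x 0 (2 * n - k) * H2 x k) +
     \sum_(0 <= k < (2 * n).+1) (-1) ^+ k * 'C(2 * n, k)%:R *
     (Q x 0 k * Q x 0 (2 * n - k) * H2 x (2 * n - k)).
    by rewrite -big_split /=; apply: eq_bigr => k _; ring.
  by rewrite sym; field.
rewrite hsum.
have bf : forall (b X0 : Cplx) (m : nat), b * m`!%:R = X0 -> b = X0 / m`!%:R.
  by move=> b X0 m <-; rewrite mulfK ?fact_neq0.
rewrite (bf _ _ _ (binX x n)) (bf _ _ _ (binX x (2 * n))) (bf _ _ _ (binP x n)).
rewrite (bf _ _ _ (binP x (2 * n))) /D !Q0X.
field.
by rewrite !fact_neq0 hP hXN.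
Qed.
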